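(* Let $k=2r+1$ with $r\geq 1$ and $G=BS(1,k)$. Let $\mathcal{C}_o$ be the set of words over $\{a^{\pm1},t^{\pm1}\}$ \[\mathcal{C}_o=\{\epsilon,a^{\pm1},\ldots,a^{\pm(r+1)}\}\cup\{a^{x_0}ta^{x_1}t\cdots ta^{x_d}t^{-d}\mid d\geq1,\ x_0\neq0,\ x_d\neq0,\ A\},\] where $A$ denotes the conditions: $|x_d|\leq r+1$; $|x_i|\leq r$ for $0\le i<d$; and if $x_{d-1}=\pm r$ then $x_d\neq\mp1$. Then $\mathcal{C}_o$ is a set of unique geodesic representatives for the conjugacy classes of $G$ contained in the subgroup $\mathbb{Z}[1/k]$: every conjugacy class of $G$ contained in $\mathbb{Z}[1/k]$ is represented by exactly one word of $\mathcal{C}_o$, and each word of $\mathcal{C}_o$ is a geodesic word whose length equals the length of its conjugacy class.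
   Context: $BS(1,k)=\langle a,t\mid tat^{-1}=a^k\rangle\cong \mathbb{Z}[1/k]\rtimes\mathbb{Z}$ via $a\mapsto(1,0)$, $t\mapsto(0,1)$, where the generator of $\mathbb{Z}$ acts on $\mathbb{Z}[1/k]=\{x\in\mathbb{Q}: k^ex\in\mathbb{Z}\text{ for some }e\}$ by multiplication by $k$; the subgroup $\mathbb{Z}[1/k]$ consists of the elements $(x,0)$. For an integer $x$, $a^x$ denotes the word consisting of $|x|$ copies of $a$ (if $x>0$) or of $a^{-1}$ (if $x<0$); $\epsilon$ is the empty word. Word length is with respect to $\{a,t\}$; a word is geodesic if no shorter word represents the same element; the length of a conjugacy class is the minimal length of its elements. *)

(* Defs.v *)
(* BS(1,k) realized concretely as Z[1/k] x| Z inside rat * int. *)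
From HB Require Import structures.
From mathcomp Require Import all_boot all_order all_algebra.
Set Implicit Arguments. Unset Strict Implicit. Unset Printing Implicit Defensive.
Import Order.TTheory GRing.Theory Num.Theory.
Local Open Scope ring_scope.

Definition elt := (rat * int)%type.

Definition inZk (k : nat) (x : rat) : Prop :=
  exists (e : nat) (z : int), (k%:R : rat) ^+ e * x = z%:~R.

Definition inG (k : nat) (g : elt) : Prop := inZk k g.1.

(* (x,m)(y,n) = (x + k^m y, m + n) : the generator of Z acts by mult. by k *)
Definition mulG (k : nat) (g h : elt) : elt :=
  (g.1 + (k%:R : rat) ^ g.2 * h.1, g.2 + h.2).
Definition invG (k : nat) (g : elt) : elt :=
  (- ((k%:R : rat) ^ (- g.2) * g.1), - g.2).
Definition oneG : elt := (0, 0).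

Inductive letter := La | Lai | Lt | Lti.

Definition gen (k : nat) (l : letter) : elt :=
  match l with
  | La => (1, 0) | Lai => (-1, 0) | Lt => (0, 1) | Lti => invG k (0, 1)
  end.

Definition word := seq letter.

Definition eval (k : nat) (w : word) : elt :=
  foldr (fun l acc => mulG k (gen k l) acc) oneG w.

Definition apow (x : int) : word :=
  match x with Posz n => nseq n La | Negz n => nseq n.+1 Lai end.

Definition conjugate (k : nat) (g h : elt) : Prop :=
  exists c : elt, inG k c /\ mulG k (mulG k c g) (invG k c) = h.

Definition geodesic (k : nat) (w : word) : Prop :=
  forall v : word, eval k v = eval k w -> (size w <= size v)%N.

(* the word a^{x_0} t a^{x_1} t ... t a^{x_{d-1}} t a^{x_d} t^{-d}, with xs = [x_0;..;x_{d-1}] *)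
Definition cword (xs : seq int) (xd : int) : word :=
  flatten [seq apow x ++ [:: Lt] | x <- xs] ++ apow xd ++ nseq (size xs) Lti.

Definition inCo (r : nat) (w : word) : Prop :=
  (exists x : int, (`|x| <= r.+1)%N /\ w = apow x)
  \/ (exists (xs : seq int) (xd : int),
        (1 <= size xs)%N /\
        nth 0 xs 0 != 0 /\
        xd != 0 /\
        (`|xd| <= r.+1)%N /\
        all (fun x => `|x| <= r)%N xs /\
        (last 0 xs = r%:Z -> xd != -1) /\
        (last 0 xs = - r%:Z -> xd != 1) /\
        w = cword xs xd).

(* Main.v *)
Require Import Defs.
From mathcomp Require Import all_boot all_order all_algebra.
From mathcomp Require Import zify ring.
Import Order.TTheory GRing.Theory Num.Theory.
Set Implicit Arguments. Unset Strict Implicit.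
Local Open Scope ring_scope.



Definition kz (r : nat) : int := ((2 * r + 1)%N)%:Z.

Definition bal (r : nat) (N : int) : int :=
  let rho := (N %% kz r)%Z in if rho <= r%:Z then rho else rho - kz r.
Definition quo (r : nat) (N : int) : int :=
  let rho := (N %% kz r)%Z in if rho <= r%:Z then (N %/ kz r)%Z else (N %/ kz r)%Z + 1.

Lemma bal_spec r N : N = bal r N + kz r * quo r N /\ `|bal r N| <= r%:Z.
Proof.
have k0 : kz r != 0 by rewrite /kz; lia.
have hk : 0 < kz r by rewrite /kz; lia.
have e := divz_eq N (kz r).
have h1 := modz_ge0 N k0. have h2 := ltz_pmod N hk.
rewrite /bal /quo /=; move: e h1 h2.
set rho := (N %% kz r)%Z; set d := (N %/ kz r)%Z.
rewrite /kz => e h1 h2.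
case: ifP => h; split; lia.
Qed.

Lemma bal_uniq r N y q : `|y| <= r%:Z -> N = y + kz r * q -> bal r N = y /\ quo r N = q.
Proof.
move=> hy e; have [e2 hb] := bal_spec r N.
move: e e2 hb; rewrite /kz; set b := bal r N; set c := quo r N => e e2 hb.
have ec : c = q by nia.
split => //; lia.
Qed.

Fixpoint Wf (r : nat) (n : nat) (N : int) : word :=
  match n with
  | 0 => [::]
  | n'.+1 => if (`|N| <= r.+1)%N then apow N
             else apow (bal r N) ++ Lt :: Wf r n' (quo r N) ++ [:: Lti]
  end.
Definition W r N := Wf r (`|N|).+1 N.

Lemma quo_lt r N : (1 <= r)%N -> (r.+1 < `|N|)%N -> (`|quo r N| < `|N|)%N.
Proof.
move=> hr hN; have [e hb] := bal_spec r N; move: e hb; rewrite /kz.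
set b := bal r N; set q := quo r N => e hb; nia.
Qed.

Lemma Wf_stable r (hr : (1 <= r)%N) n m N :
  (`|N| < n)%N -> (`|N| < m)%N -> Wf r n N = Wf r m N.
Proof.
elim: n m N => [|n IH] [|m] N //=; try lia.
move=> h1 h2; case: ifP => // hN.
rewrite (IH m) //; have := @quo_lt r N hr; lia.
Qed.

Lemma W_base r N : (`|N| <= r.+1)%N -> W r N = apow N.
Proof. by rewrite /W /= => ->. Qed.

Lemma W_step r (hr : (1 <= r)%N) N : (r.+1 < `|N|)%N ->
  W r N = apow (bal r N) ++ Lt :: W r (quo r N) ++ [:: Lti].
Proof.
move=> hN; rewrite /W /=; have -> : (`|N| <= r.+1)%N = false by lia.
rewrite (@Wf_stable r hr _ (`|quo r N|).+1) //; have := @quo_lt r N hr hN; lia.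
Qed.

Lemma size_apow x : size (apow x) = `|x|%N.
Proof. by case: x => n /=; rewrite size_nseq. Qed.

Definition S r N := size (W r N).

Lemma S_base r N : (`|N| <= r.+1)%N -> S r N = `|N|%N.
Proof. by move=> h; rewrite /S W_base // size_apow. Qed.

Lemma S_step r (hr : (1 <= r)%N) N : (r.+1 < `|N|)%N ->
  S r N = (`|bal r N| + 2 + S r (quo r N))%N.
Proof.
move=> h; rewrite /S W_step // size_cat /= size_cat /= size_apow; lia.
Qed.



Lemma S_neg r (hr : (1 <= r)%N) N : S r (- N) = S r N.
Proof.
move: {2}(`|N|).+1 (ltnSn `|N|) => n; elim: n N => [|n IH] N hN; first (lia).
case: (leqP `|N| r.+1) => h.
  rewrite !S_base //; lia.
rewrite (S_step hr h) (@S_step r hr (-N)); last by lia.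
have [e hb] := bal_spec r N.
have [-> ->] : bal r (- N) = - bal r N /\ quo r (- N) = - quo r N.
  apply: bal_uniq; first (lia).
  by rewrite {1}e opprD mulrN.
rewrite IH; first (lia).
have := @quo_lt r N hr h; lia.
Qed.


Lemma S_succ r (hr : (1 <= r)%N) N : (S r (N + 1) <= S r N + 1)%N.
Proof.
move: {2}(`|N|).+1 (ltnSn `|N|) => n; elim: n N => [|n IH] N hN; first lia.
have [e hb] := bal_spec r N.
case: (leqP `|N + 1| r.+1) => h1; case: (leqP `|N| r.+1) => h0.
- rewrite (S_base h0) (S_base h1); lia.
- have eN : N = - (r.+2)%:Z by lia.
  rewrite (S_base h1) (S_step hr h0).
  have [-> ->] : bal r N = (r%:Z - 1) /\ quo r N = -1.
    by apply: bal_uniq; rewrite ?eN /kz; lia.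
  rewrite S_base //=; lia.
- have eN : N = (r.+1)%:Z by lia.
  rewrite (S_base h0) (S_step hr h1).
  have [-> ->] : bal r (N + 1) = (1 - r%:Z) /\ quo r (N + 1) = 1.
    by apply: bal_uniq; rewrite ?eN /kz; lia.
  rewrite S_base //=; lia.
- rewrite (S_step hr h0) (S_step hr h1).
  case: (boolP (bal r N == r%:Z)) => /eqP hy.
    have [-> ->] : bal r (N + 1) = - r%:Z /\ quo r (N + 1) = quo r N + 1.
      apply: bal_uniq; first lia.
      by rewrite {1}e hy mulrDr mulr1 /kz; lia.
    have := IH (quo r N); have := @quo_lt r N hr h0; rewrite hy; set s1 := S r (quo r N + 1); set s0 := S r (quo r N); lia.
  have [-> ->] : bal r (N + 1) = bal r N + 1 /\ quo r (N + 1) = quo r N.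
    apply: bal_uniq; first lia.
    by rewrite {1}e; lia.
  lia.
Qed.

Lemma S_pred r (hr : (1 <= r)%N) N : (S r (N - 1) <= S r N + 1)%N.
Proof.
rewrite -(S_neg hr (N - 1)) -(S_neg hr N).
have -> : - (N - 1) = - N + 1 by rewrite opprB addrC.
exact: S_succ.
Qed.

Lemma S_lip r (hr : (1 <= r)%N) M j : (S r (M + j) <= S r M + `|j|)%N.
Proof.
case: j => n.
  elim: n => [|n IH]; first by rewrite addr0 addn0.
  have -> : M + (n.+1)%:Z = (M + n%:Z) + 1 by lia.
  apply: leq_trans (S_succ hr _) _; move: IH; set s := S r (M + n%:Z); simpl; lia.
elim: n => [|n IH]; first by have -> : M + Negz 0 = M - 1 by [lia]; apply: S_pred.
have -> : M + Negz n.+1 = (M + Negz n) - 1 by lia.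
apply: leq_trans (S_pred hr _) _; move: IH; set s := S r (M + Negz n); simpl; lia.
Qed.

Lemma S_le_abs r (hr : (1 <= r)%N) N : (S r N <= `|N|)%N.
Proof.
move: {2}(`|N|).+1 (ltnSn `|N|) => n; elim: n N => [|n IH] N hN; first lia.
case: (leqP `|N| r.+1) => h0; first by rewrite S_base.
rewrite (S_step hr h0).
have := IH (quo r N); have := @quo_lt r N hr h0.
have [e hb] := bal_spec r N; move: e hb; rewrite /kz.
set b := bal r N; set q := quo r N; set s := S r q; nia.
Qed.

Lemma S_bound_step r (hr : (1 <= r)%N) c M :
  (S r (c + kz r * M) <= `|c| + 2 + S r M)%N.
Proof.
set N := c + kz r * M.
case: (leqP `|N| r.+1) => h0.
  rewrite (S_base h0); move: h0; rewrite /N /kz; set s := S r M.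
  case: (M =P 0) => [->|hM]; first lia.
  have : (1 <= `|M|)%N by lia.
  nia.
rewrite (S_step hr h0).
have [e hb] := bal_spec r c.
have [-> ->] : bal r N = bal r c /\ quo r N = quo r c + M.
  apply: bal_uniq => //; rewrite /N {1}e mulrDr; lia.
rewrite [quo r c + M]addrC; have := S_lip hr M (quo r c).
move: e hb; rewrite /kz; set b := bal r c; set q := quo r c; set s1 := S r (M + q); set s0 := S r M.
move=> e hb; have : (`|b| + `|q| <= `|c|)%N.
  case: (q =P 0) => [hq|hq]; first lia.
  have : (1 <= `|q|)%N by lia.
  nia.
lia.
Qed.

Lemma S_mulk r (hr : (1 <= r)%N) M : (S r M <= S r (kz r * M))%N.
Proof.
case: (leqP `|kz r * M| r.+1) => h0.
  have -> : M = 0 by move: h0; rewrite /kz; nia.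
  by rewrite mulr0.
rewrite (S_step hr h0).
have [-> ->] : bal r (kz r * M) = 0 /\ quo r (kz r * M) = M.
  apply: bal_uniq => //; lia.
lia.
Qed.

Definition rval r (C : seq int) : int := foldr (fun c acc => c + kz r * acc) 0 C.
Definition sumabs (C : seq int) : nat := foldr (fun c acc => `|c| + acc)%N 0%N C.

Lemma S_rep r (hr : (1 <= r)%N) C D :
  (size C <= D.+1)%N -> (S r (rval r C) <= sumabs C + 2 * D)%N.
Proof.
elim: C D => [|c C IH] D /=.
  by move=> _; rewrite S_base.
case: C IH => [|c' C] IH hs.
  rewrite /= mulr0 addr0; have := S_le_abs hr c; lia.
case: D hs => [|D] hs //=.
have := IH D hs; have := S_bound_step hr c (rval r (c' :: C)).
rewrite /=; set s1 := S r _; set s0 := S r _. lia.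
Qed.



Lemma mulGA k (hk : (0 < k)%N) g h f : mulG k (mulG k g h) f = mulG k g (mulG k h f).
Proof.
have k0 : (k%:R : rat) != 0 by rewrite pnatr_eq0 -lt0n.
case: g h f => [g1 g2] [h1 h2] [f1 f2]; rewrite /mulG /=.
by rewrite expfzDr // mulrDr addrA mulrA addrA.
Qed.

Lemma mul1G k g : mulG k oneG g = g.
Proof. by case: g => x h; rewrite /mulG /= expr0z mul1r !add0r. Qed.

Lemma eval_cat k (hk : (0 < k)%N) u v : eval k (u ++ v) = mulG k (eval k u) (eval k v).
Proof.
elim: u => [|l u IH] /=; first by rewrite mul1G.
by rewrite IH mulGA.
Qed.

Lemma eval_apow k x : eval k (apow x) = (x%:~R, 0).
Proof.
case: x => n /=.
  elim: n => [|n IH] //=; rewrite IH /mulG /= expr0z mul1r add0r.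
  by rewrite -!pmulrn mulrS.
elim: n => [|n IH] /=.
  by rewrite /mulG /= expr0z mul1r addr0 add0r.
rewrite IH /mulG /= expr0z mul1r add0r; congr (_, _).
rewrite !NegzE.
by rewrite -[(-1 : rat)]/((-1 : int)%:~R) -intrD; congr (_%:~R); lia.
Qed.

Lemma kzR r : ((kz r)%:~R : rat) = ((2 * r + 1)%N)%:R.
Proof. by rewrite /kz -pmulrn. Qed.

Lemma eval_W r (hr : (1 <= r)%N) N : eval (2 * r + 1)%N (W r N) = (N%:~R, 0).
Proof.
move: {2}(`|N|).+1 (ltnSn `|N|) => n; elim: n N => [|n IH] N hN; first lia.
case: (leqP `|N| r.+1) => h0; first by rewrite W_base // eval_apow.
have hk : (0 < 2 * r + 1)%N by lia.
rewrite (W_step hr h0) (eval_cat hk) eval_apow /= (eval_cat hk) IH; last first.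
  have := quo_lt hr h0; lia.
have [e _] := bal_spec r N.
rewrite /mulG /invG /= !expr0z !expr1z !mul1r !mulr0 !oppr0 !addr0 !add0r.
rewrite {3}e intrD intrM kzR; by congr (_,_).
Qed.

Fixpoint addat (p : nat) (a : int) (C : seq int) : seq int :=
  match p, C with
  | 0, [::] => [:: a]
  | 0, c :: C => (a + c) :: C
  | p.+1, [::] => 0 :: addat p a [::]
  | p.+1, c :: C => c :: addat p a C
  end.

Lemma addat_val r p a C : rval r (addat p a C) = rval r C + a * kz r ^+ p.
Proof.
elim: p C => [|p IH] [|c C] /=; rewrite ?expr0 ?mulr1 ?mulr0 ?addr0 ?add0r //.
- lia.
- rewrite IH /= exprS; ring.
- rewrite IH exprS; ring.
Qed.

Lemma addat_sum p a C : (sumabs (addat p a C) <= sumabs C + `|a|)%N.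
Proof.
elim: p C => [|p IH] [|c C] /=; try lia.
- have := IH [::]; rewrite /=; lia.
- have := IH C; lia.
Qed.

Lemma addat_size p a C : (size (addat p a C) <= maxn (size C) p.+1)%N.
Proof.
elim: p C => [|p IH] [|c C] /=; try lia.
- have := IH [::]; rewrite /=; lia.
- have := IH C; lia.
Qed.

Lemma intrX_kz r p : ((kz r ^+ p)%:~R : rat) = ((2 * r + 1)%N%:R) ^+ p.
Proof. by rewrite rmorphXn /= kzR. Qed.

Lemma word_lb r (hr : (1 <= r)%N) v :
  exists (p D : nat) (C : seq int),
    [/\ 0 <= (eval (2 * r + 1)%N v).2 + p%:Z,
        (eval (2 * r + 1)%N v).2 + p%:Z <= D%:Z,
        (p <= D)%N && (size C <= D.+1)%N,
        (eval (2 * r + 1)%N v).1 * ((2 * r + 1)%N%:R) ^+ p = (rval r C)%:~R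
      & (sumabs C + 2 * D <= size v + `|(eval (2 * r + 1)%N v).2|)%N].
Proof.
set K : rat := ((2 * r + 1)%N%:R).
have K0 : K != 0 by rewrite /K pnatr_eq0; lia.
have K0' : (2 * (r%:R) + 1 : rat) != 0 by move: K0; rewrite /K natrD natrM.
elim: v => [|l v [p [D [C [h1 h2 /andP[h3 h4] h5 h6]]]]].
  by exists 0%N, 0%N, [::]; split => //=; rewrite mul0r.
move: h1 h2 h3 h4 h5 h6; rewrite /=.
case: (eval (2 * r + 1)%N v) => x h /= h1 h2 h3 h4 h5 h6.
case: l.
- exists p, D, (addat p 1 C); rewrite /mulG /= expr0z mul1r add0r; split => //.
  + have := addat_size p 1 C; lia.
  + by rewrite addat_val mulrDl h5 intrD !mul1r intrX_kz addrC.
  + have := addat_sum p 1 C; lia.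
- exists p, D, (addat p (-1) C); rewrite /mulG /= expr0z mul1r add0r; split => //.
  + have := addat_size p (-1) C; lia.
  + by rewrite addat_val mulrDl h5 intrD !mulN1r intrN intrX_kz addrC.
  + have := addat_sum p (-1) C; lia.
- rewrite /mulG /= expr1z add0r.
  case: p h1 h2 h3 h5 => [|p] h1 h2 h3 h5.
    exists 0%N, D.+1, (0 :: C); split => //=; try lia.
    by rewrite add0r intrM kzR -h5 mulrA.
  exists p, D; exists C; split => //=; try lia.
  by rewrite -h5 exprS mulrCA mulrA.
- rewrite /gen /mulG /invG /= mulr0 oppr0 add0r.
  have hK : K ^ (-1) = K^-1 by rewrite -invr_expz expr1z.
  case: (ltnP p D) => hpD.
    exists p.+1, D, C; split => //=; try lia.
    rewrite -h5 exprS -invr_expz expr1z; field; exact: K0'.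
  exists p.+1, D.+1, C; split => //=; try lia.
  rewrite -h5 exprS -invr_expz expr1z; field; exact: K0'.
Qed.



Lemma nseqS_r (T : Type) n (x : T) : nseq n.+1 x = nseq n x ++ [:: x].
Proof. by elim: n => //= n ->. Qed.
Arguments nseqS_r {T} n x.

Lemma cword_cons x xs xd : cword (x :: xs) xd = apow x ++ Lt :: cword xs xd ++ [:: Lti].
Proof.
rewrite /cword /= -[Lti :: nseq _ _]/(nseq (size xs).+1 Lti) nseqS_r -!catA /=.
by [].

Qed.

Lemma cword_nil xd : cword [::] xd = apow xd.
Proof. by rewrite /cword /= cats0. Qed.

Definition lastok r (xs : seq int) (xd : int) :=
  (last 0 xs = r%:Z -> xd != -1) /\ (last 0 xs = - r%:Z -> xd != 1).

Lemma W_to_Co r (hr : (1 <= r)%N) N : N != 0 ->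
  (`|N| <= r.+1)%N \/
  exists xs xd, [/\ (1 <= size xs)%N, nth 0 xs 0 = bal r N,
     xd != 0 /\ (`|xd| <= r.+1)%N, all (fun x => `|x| <= r)%N xs /\ lastok r xs xd
   & W r N = cword xs xd].
Proof.
move: {2}(`|N|).+1 (ltnSn `|N|) => n; elim: n N => [|n IH] N hN N0; first lia.
case: (leqP `|N| r.+1) => h0; [by left | right].
have [e hb] := bal_spec r N.
have q0 : quo r N != 0.
  apply/eqP => hq; move: e; rewrite hq mulr0 addr0 => e; lia.
have hq := quo_lt hr h0.
case: (IH (quo r N) ltac:(lia) q0) => [hqs | [xs [xd [s1 s2 [s3 s4] [s5 s6] s7]]]].
  exists [:: bal r N], (quo r N); split => //=.
  - split; first by rewrite andbT; lia.
    rewrite /lastok /=; split => hy; apply/eqP => hq1; move: e; rewrite hy hq1 /kz => e; lia.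
  - by rewrite (W_step hr h0) cword_cons cword_nil W_base.
exists (bal r N :: xs), xd; split => //=.
- split; first by rewrite s5 andbT; lia.
  case: xs s1 s6 {s2 s5 s7} => [|z zs] //= _.
- by rewrite (W_step hr h0) cword_cons s7.
Qed.

Lemma cword_W r (hr : (1 <= r)%N) xs xd :
  xd != 0 -> (`|xd| <= r.+1)%N -> all (fun x => `|x| <= r)%N xs -> lastok r xs xd ->
  [/\ W r (rval r (rcons xs xd)) = cword xs xd,
      rval r (rcons xs xd) != 0,
      (xs != [::] -> (r.+2 <= `|rval r (rcons xs xd)|)%N)
    & forall x0 xs', xs = x0 :: xs' -> bal r (rval r (rcons xs xd)) = x0].
Proof.
move=> xd0 hxd.
elim: xs => [|x0 xs IH] /=.
  move=> _ _; rewrite mulr0 addr0 cword_nil W_base //; split => //.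
move=> /andP[hx0 hall] hlast.
have hlast' : lastok r xs xd.
  case: xs {IH hall} hlast => [|z zs] //=.
  rewrite /lastok /=; split => h; lia.
have [IH1 IH2 IH3 _] := IH hall hlast'.
set Q := rval r (rcons xs xd) in IH1 IH2 IH3 *.
have hN : (r.+2 <= `|(x0 + kz r * Q)%R|)%N.
  case: (eqVneq xs [::]) => [exs|nexs].
    have eQ : Q = xd by rewrite /Q exs /= mulr0 addr0.
    rewrite eQ; move: hlast; rewrite exs /lastok /= /kz => -[l1 l2].
    have : (`|xd| >= 2)%N \/ xd = 1 \/ xd = -1 by lia.
    case=> [h2|[h1|h1]].
      nia.
    have : x0 != - r%:Z by apply/eqP => h; move: (l2 h); rewrite h1.
    lia.
    have : x0 != r%:Z by apply/eqP => h; move: (l1 h); rewrite h1.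
    lia.
  have := IH3 nexs; rewrite /kz; nia.
have [hb hq] : bal r (x0 + kz r * Q) = x0 /\ quo r (x0 + kz r * Q) = Q.
  by apply: bal_uniq => //; lia.
split.
- by rewrite (W_step hr hN) hb hq IH1 cword_cons.
- apply/eqP => h; move: hN; rewrite h; lia.
- by move=> _.
- by move=> ? ? [<- _].
Qed.

Lemma Co_is_W r (hr : (1 <= r)%N) w : inCo r w -> exists m, w = W r m /\ (m = 0 \/ bal r m != 0).
Proof.
case=> [[x [hx ->]] | [xs [xd [h1 [h2 [h3 [h4 [h5 [h6 [h7 ->]]]]]]]]]].
  exists x; split; first by rewrite W_base.
  case: (eqVneq x 0) => [->|x0]; [by left | right].
  apply/eqP => hb; have [e _] := bal_spec r x; move: e; rewrite hb add0r /kz => e.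
  have : quo r x != 0 by apply/eqP => hq; move: e; rewrite hq mulr0 => e; move: x0; rewrite e.
  nia.
have [W1 _ _ W4] := cword_W hr h3 h4 h5 (conj h6 h7).
exists (rval r (rcons xs xd)); split => //; right.
case: xs h1 h2 W4 {W1 h5 h6 h7} => [|x0 xs] //= _ h2 W4.
by rewrite (W4 x0 xs).
Qed.

Lemma W_is_Co r (hr : (1 <= r)%N) m : (m = 0 \/ bal r m != 0) -> inCo r (W r m).
Proof.
case=> [->|hb].
  by left; exists 0; rewrite W_base.
have m0 : m != 0.
  apply/eqP => em; move: hb; have [-> _] : bal r m = 0 /\ quo r m = 0 by apply: bal_uniq => //; rewrite em; lia.
  by rewrite eqxx.
case: (W_to_Co hr m0) => [h | [xs [xd [s1 s2 [s3 s4] [s5 [s6 s7]] s8]]]].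
  by left; exists m; rewrite W_base.
right; exists xs, xd; rewrite s2; do 7 (split => //).
Qed.



Lemma K0 r : ((2 * r + 1)%N%:R : rat) != 0.
Proof. by rewrite pnatr_eq0; lia. Qed.

Lemma conj_form r x h : conjugate (2 * r + 1)%N (x, 0) h ->
  exists j : int, h = (((2 * r + 1)%N%:R : rat) ^ j * x, 0).
Proof.
case=> [[c1 c2] [_ <-]]; exists c2.
rewrite /mulG /invG /= addr0 subrr mulrN mulrA -expfzDr ?K0 //.
rewrite subrr expr0z mul1r; congr (_, _); ring.
Qed.

Lemma conj_intro r x j : conjugate (2 * r + 1)%N (x, 0) (((2 * r + 1)%N%:R : rat) ^ j * x, 0).
Proof.
exists (0, j); split; first by exists 0%N, 0; rewrite mulr0.
rewrite /mulG /invG /= addr0 subrr mulr0 oppr0 mulr0 addr0 add0r; done.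
Qed.

Lemma lb_main r (hr : (1 <= r)%N) v X : eval (2 * r + 1)%N v = (X, 0) ->
  exists (p : nat) (V : int), X * ((2 * r + 1)%N%:R) ^+ p = V%:~R /\ (S r V <= size v)%N.
Proof.
have [p [D [C [h1 h2 /andP[h3 h4] h5 h6]]]] := word_lb hr v.
move=> ev; rewrite ev /= in h1 h2 h5 h6.
exists p, (rval r C); split => //.
have := S_rep hr h4; lia.
Qed.

Lemma S_mulkX r (hr : (1 <= r)%N) n M : (S r M <= S r (kz r ^+ n * M))%N.
Proof.
elim: n => [|n IH]; first by rewrite expr0 mul1r.
apply: leq_trans IH _; rewrite exprS -mulrA; exact: S_mulk.
Qed.

Lemma Kpow_int r j (m V : int) :
  ((2 * r + 1)%N%:R : rat) ^ j * m%:~R = V%:~R ->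
  (exists n, V = kz r ^+ n * m) \/ (exists n, m = kz r ^+ n.+1 * V).
Proof.
have inj : injective (fun z : int => (z%:~R : rat)) by apply: intr_inj.
case: j => n e.
  left; exists n; apply: inj => /=; rewrite intrM intrX_kz; symmetry; exact: e.
right; exists n; apply: inj => /=; rewrite intrM intrX_kz.
have h1 : ((2 * r + 1)%N%:R : rat) ^+ n.+1 * ((2 * r + 1)%N%:R : rat) ^ (Negz n) = 1.
  rewrite NegzE -invr_expz; apply: mulfV; exact: expf_neq0 (K0 r).
transitivity (((2 * r + 1)%N%:R : rat) ^+ n.+1 * (((2 * r + 1)%N%:R : rat) ^ (Negz n) * m%:~R)); first by rewrite mulrA h1 mul1r.
congr (_ * _); exact: e.
Qed.

Definition cokind r (m : int) := m = 0 \/ bal r m != 0.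

Lemma co_zero r (hr : (1 <= r)%N) m n M : cokind r m -> m = kz r ^+ n.+1 * M -> m = 0.
Proof.
case=> [//|hb] e; move: hb.
have [-> _] : bal r m = 0 /\ quo r m = kz r ^+ n * M.
  by apply: bal_uniq => //; rewrite e exprS -mulrA add0r.
by rewrite eqxx.
Qed.

Lemma S0 r : S r 0 = 0%N.
Proof. by rewrite S_base. Qed.

Lemma key r (hr : (1 <= r)%N) m j p V : cokind r m ->
  ((2 * r + 1)%N%:R : rat) ^ j * m%:~R * ((2 * r + 1)%N%:R) ^+ p = V%:~R ->
  (S r m <= S r V)%N.
Proof.
move=> hc e.
have e' : ((2 * r + 1)%N%:R : rat) ^ (j + p%:Z) * m%:~R = V%:~R.
  by rewrite expfzDr ?K0 // mulrAC.
case: (Kpow_int e') => [[n ->] | [n em]]; first exact: S_mulkX.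
by rewrite (co_zero hr hc em) S0.
Qed.

Lemma uniq_m r (hr : (1 <= r)%N) m1 m2 j1 j2 : cokind r m1 -> cokind r m2 ->
  ((2 * r + 1)%N%:R : rat) ^ j1 * m1%:~R = ((2 * r + 1)%N%:R : rat) ^ j2 * m2%:~R ->
  m1 = m2.
Proof.
move=> c1 c2 e.
have kz0 : kz r != 0 by rewrite /kz; lia.
have e' : ((2 * r + 1)%N%:R : rat) ^ (j1 - j2) * m1%:~R = m2%:~R.
  set K := ((2 * r + 1)%N%:R : rat).
  transitivity (K ^ (- j2) * (K ^ j1 * m1%:~R)).
    rewrite expfzDr ?K0 //; ring.
  transitivity (K ^ (- j2) * (K ^ j2 * m2%:~R)); first by congr (_ * _); exact: e.
  by rewrite mulrA -expfzDr ?K0 // addNr expr0z mul1r.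
case: (Kpow_int e') => [[[|n] em] | [n em]].
- by rewrite em expr0 mul1r.
- have z2 := co_zero hr c2 em.
  move: em; rewrite z2 => /esym /eqP; rewrite mulf_eq0 expf_eq0 (negPf kz0) andbF /=.
  by move/eqP.
- have z1 := co_zero hr c1 em.
  by move: em; rewrite z1 => /esym /eqP; rewrite mulf_eq0 expf_eq0 (negPf kz0) andbF /= => /eqP.
Qed.

Lemma decomp r (hr : (1 <= r)%N) z : z != 0 -> exists s m, z = kz r ^+ s * m /\ bal r m != 0.
Proof.
move: {2}(`|z|).+1 (ltnSn `|z|) => n; elim: n z => [|n IH] z hz z0; first lia.
case: (eqVneq (bal r z) 0) => hb; last by exists 0%N, z; rewrite expr0 mul1r.
have [e _] := bal_spec r z; rewrite hb add0r in e.
have q0 : quo r z != 0 by apply/eqP => hq; move: z0; rewrite e hq mulr0 eqxx.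
have [s [m [em hm]]] := IH (quo r z) ltac:(move: e hz; rewrite /kz; nia) q0.
by exists s.+1, m; rewrite e em exprS mulrA.
Qed.

Unset Implicit Arguments.

Theorem proposition3p2 (r : nat) (hr : (1 <= r)%N) :
  let k := (2 * r + 1)%N in
  (forall g : elt, inG k g -> g.2 = 0 ->
     exists! w : word, inCo r w /\ conjugate k (eval k w) g)
  /\ (forall w : word, inCo r w ->
        [/\ (eval k w).2 = 0,
            geodesic k w
          & forall v : word, conjugate k (eval k w) (eval k v) ->
              (size w <= size v)%N]).
Proof.
move=> k; rewrite /k {k}.
set K := ((2 * r + 1)%N%:R : rat).
have K0' : K != 0 by exact: K0.
split.
- case=> x h [e [z hz]] /= h0; subst h.
  have [m [j [cm ex]]] : exists m j, cokind r m /\ x = K ^ j * m%:~R.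
    case: (eqVneq z 0) => [z0|z0].
      exists 0, 0; split; first by left.
      move: hz; rewrite z0 mulr0 => /eqP; rewrite mulf_eq0 expf_eq0 (negPf K0') andbF /=.
      by move/eqP.
    have [s [m [ez hm]]] := decomp hr z0.
    exists m, (s%:Z - e%:Z); split; first by right.
    apply: (mulfI (expf_neq0 e K0')).
    move: hz; rewrite ez intrM intrX_kz -/K => ->.
    rewrite expfzDr // -invr_expz.
    rewrite -mulrA mulrCA [K ^+ e * _]mulrA mulfV ?mul1r //.
    exact: expf_neq0.
  exists (W r m); split.
    split; first exact: W_is_Co.
    by rewrite eval_W // ex; exact: conj_intro.
  move=> w [hw hc]; have [m' [ew cm']] := Co_is_W hr hw; subst w.
  rewrite eval_W // in hc; have [j' [ej']] := conj_form hc.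
  by rewrite (uniq_m hr cm cm' (j1 := j) (j2 := j') _) // -ex.
- move=> w hw; have [m [-> cm]] := Co_is_W hr hw.
  rewrite eval_W //; split => //.
  + move=> v; rewrite eval_W // => ev.
    have [p [V [hV hs]]] := lb_main hr ev.
    apply: leq_trans hs; apply: (key hr (j := 0) (p := p)) => //.
    by rewrite expr0z mul1r.
  + move=> v hc; have [j ej] := conj_form hc.
    have [p [V [hV hs]]] := lb_main hr ej.
    apply: leq_trans hs; exact: (key hr (j := j) (p := p)).
Qed.
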